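(* Let $\Omega\in\mathscr A$ be a $1$-admissible set with $\mathfrak m(\Omega)\in(0,+\infty)$ and $\mathscr C_1(\Omega)\neq\emptyset$. If (P.4) and (P.5) hold, then there exist $1$-Cheeger sets of $\Omega$ of maximal $\mathfrak m$-measure among all $1$-Cheeger sets of $\Omega$. If moreover (P.3) holds, then there is a unique (up to $\mathfrak m$-negligible sets) $1$-Cheeger set $E^+$ of maximal measure, and $E\subset E^+$ (i.e. $\mathfrak m(E\setminus E^+)=0$) for every $E\in\mathscr C_1(\Omega)$.
   Context: $(X,\mathscr A,\mathfrak m)$ is a non-negative $\sigma$-finite measure space; for $A,B\in\mathscr A$, ''$A\subset B$'' means $\mathfrak m(A\setminus B)=0$. $P\colon\mathscr A\to[0,+\infty]$ is a proper functional. (P.3): $P(E\cap F)+P(E\cup F)\le P(E)+P(F)$. (P.4): if $\chi_{E_k}\to\chi_E$ in $L^1(X,\mathfrak m)$ then $P(E)\le\liminf_k P(E_k)$. (P.5): for every $c\ge0$, $\{\chi_E:E\in\mathscr A,\ P(E)\le c\}$ is compact in $L^1(X,\mathfrak m)$. $\Omega$ is $1$-admissible if it contains some $E$ with $0<\mathfrak m(E)<+\infty$, $P(E)<+\infty$; $h_1(\Omega)=\inf\{P(E)/\mathfrak m(E): E\subset\Omega,\ 0<\mathfrak m(E)<+\infty,\ P(E)<+\infty\}$; minimizers are $1$-Cheeger sets, forming $\mathscr C_1(\Omega)$. *)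

(* Defs.v *)
From HB Require Import structures.
From mathcomp Require Import all_boot all_order all_algebra.
From mathcomp Require Import all_classical all_reals all_analysis.
Set Implicit Arguments. Unset Strict Implicit. Unset Printing Implicit Defensive.
Import Order.TTheory GRing.Theory Num.Theory.
Local Open Scope classical_set_scope.
Local Open Scope ring_scope.
Local Open Scope ereal_scope.

Section Cheeger.
Context {d : measure_display} {X : measurableType d} {R : realType}.
Variables (mu : {measure set X -> \bar R}) (P : set X -> \bar R).

Definition ae_sub (A B : set X) : Prop := mu (A `\` B) = 0.

Definition indic_L1_cvg (E : nat -> set X) (F : set X) : Prop :=
  (fun k => \int[mu]_x (`| \1_(E k) x - \1_F x |)%:E) @ \oo --> 0.

Definition proper_functional : Prop := exists E, measurable E /\ P E < +oo.

Definition P3 : Prop := forall E F, measurable E -> measurable F ->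
  P (E `&` F) + P (E `|` F) <= P E + P F.

Definition P4 : Prop := forall (E : nat -> set X) (F : set X),
  (forall k, measurable (E k)) -> measurable F -> indic_L1_cvg E F ->
  P F <= limn_einf (fun k => P (E k)).

(* (P.5) for every c >= 0, {chi_E : E in A, P(E) <= c} (as a subset of
   L^1, i.e. mu(E) < +oo) is (sequentially) compact in L^1(X, mu) *)
Definition P5 : Prop := forall c : R, (0 <= c)%R ->
  forall E : nat -> set X,
    (forall k, measurable (E k) /\ mu (E k) < +oo /\ P (E k) <= c%:E) ->
    exists (phi : nat -> nat) (F : set X),
      {homo phi : m n / (m < n)%N >-> (m < n)%N} /\
      measurable F /\ mu F < +oo /\ P F <= c%:E /\
      indic_L1_cvg (fun k => E (phi k)) F.

Definition cheeger_cands (Om : set X) : set (set X) :=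
  [set E | measurable E /\ ae_sub E Om /\ 0 < mu E /\ mu E < +oo /\ P E < +oo].

Definition admissible1 (Om : set X) : Prop := cheeger_cands Om !=set0.

(* P(E)/m(E), for E with finite P(E) and finite positive m(E) *)
Definition ratio (E : set X) : \bar R := ((fine (P E)) / (fine (mu E)))%:E.

Definition h1 (Om : set X) : \bar R := ereal_inf [set ratio E | E in cheeger_cands Om].

Definition cheeger1 (Om : set X) : set (set X) :=
  [set E | cheeger_cands Om E /\ ratio E = h1 Om].

End Cheeger.

(* Main.v *)
Require Import Defs.
From HB Require Import structures.
From mathcomp Require Import all_boot all_order all_algebra.
From mathcomp Require Import all_classical all_reals all_analysis.
From mathcomp Require Import measurable_realfun.
From mathcomp Require Import lra.
Import Order.TTheory GRing.Theory Num.Theory.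
Local Open Scope classical_set_scope.
Local Open Scope ring_scope.
Local Open Scope ereal_scope.

Section Aux.
Context {d : measure_display} {X : measurableType d} {R : realType}.
Variable (mu : {measure set X -> \bar R}).

Lemma ind_bound (A B : set X) : measurable A -> measurable B ->
  mu (A `\` B) <= \int[mu]_x (`|\1_A x - \1_B x|)%:E.
Proof.
move=> mA mB.
have mAB : measurable (A `\` B) by apply: measurableD.
have := integral_indic mu measurableT mAB; rewrite setIT => <-.
apply: ge0_le_integral => //.
- by apply/measurable_EFinP; exact: measurable_indic.
- apply/measurable_EFinP; apply: measurableT_comp => //.
  apply: measurable_funB; exact: measurable_indic.
move=> x _; rewrite lee_fin !indicE.
case: (boolP (x \in A)) => xA; case: (boolP (x \in B)) => xB; 
  rewrite ?in_setE /= in xA xB *.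
all: case: (boolP (x \in A `\` B)) => H; rewrite ?in_setE /= in H;
  rewrite ?subrr ?normr0 ?subr0 ?sub0r ?normrN ?normr1 //; try by case: H.
by case: H => /mem_set; rewrite (negbTE xA).
Qed.

Definition Idist (A B : set X) := \int[mu]_x (`|\1_A x - \1_B x|)%:E.

Lemma Idist_ge0 A B : 0 <= Idist A B.
Proof. by apply: integral_ge0 => x _; rewrite lee_fin. Qed.

Lemma IdistC A B : Idist A B = Idist B A.
Proof. by rewrite /Idist; apply: eq_integral => x _; rewrite distrC. Qed.

Lemma mu_le_Idist A B : measurable A -> measurable B ->
  mu A <= mu B + Idist A B.
Proof.
move=> mA mB; rewrite (measureDI mu mA mB) addeC.
apply: leeD; first by apply: le_measure => //; rewrite inE //; exact: measurableI.
exact: ind_bound.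
Qed.

Lemma muD_le_Idist A B : measurable A -> measurable B -> mu (A `\` B) <= Idist A B.
Proof. exact: ind_bound. Qed.

End Aux.

Section Main.
Context {d : measure_display} {X : measurableType d} {R : realType}.
Variables (mu : {measure set X -> \bar R}) (P : set X -> \bar R) (Om : set X).
Variable (P_ge0 : forall E, measurable E -> 0 <= P E) (mOm : measurable Om).

Lemma cand_fin E : cheeger_cands mu P Om E ->
  [/\ P E = (fine (P E))%:E, mu E = (fine (mu E))%:E,
      (0 < fine (mu E))%R & (0 <= fine (P E))%R].
Proof.
case=> mE [_ [m0 [moo Poo]]].
have P0 := P_ge0 E mE.
have fP : P E \is a fin_num by rewrite ge0_fin_numE.
have fm : mu E \is a fin_num by rewrite ge0_fin_numE.
split; [by rewrite fineK|by rewrite fineK| |by rewrite fine_ge0].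
by rewrite -lte_fin fineK.
Qed.

Lemma h1_le_ratio E : cheeger_cands mu P Om E -> h1 mu P Om <= Defs.ratio mu P E.
Proof. by move=> cE; apply: ereal_inf_lbound; exists E. Qed.

Variable h : R.
Hypothesis hE : h1 mu P Om = h%:E.

Lemma h_low E : cheeger_cands mu P Om E -> (h * fine (mu E) <= fine (P E))%R.
Proof.
move=> cE; have [_ _ m0 _] := cand_fin _ cE.
have := h1_le_ratio _ cE; rewrite hE /Defs.ratio lee_fin.
by rewrite ler_pdivlMr.
Qed.

Lemma cheeger_of E : cheeger_cands mu P Om E ->
  (fine (P E) <= h * fine (mu E))%R -> cheeger1 mu P Om E.
Proof.
move=> cE le; split => //; apply: le_anti; rewrite h1_le_ratio // andbT.
have [_ _ m0 _] := cand_fin _ cE.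
by rewrite hE /Defs.ratio lee_fin ler_pdivrMr.
Qed.

Lemma cheeger_eq E : cheeger1 mu P Om E -> fine (P E) = (h * fine (mu E))%R.
Proof.
case=> cE rE; have [_ _ m0 _] := cand_fin _ cE.
move: rE; rewrite hE /Defs.ratio => -[] <-.
by rewrite divfK // gt_eqF.
Qed.


Lemma ae_le E : measurable E -> ae_sub mu E Om -> mu E <= mu Om.
Proof.
move=> mE aE.
have e : mu E = mu (E `\` Om) + mu (E `&` Om).
  by have := measureDI mu mE mOm => H; exact: H.
rewrite e aE add0e; apply: le_measure; rewrite ?inE //; try exact: measurableI.
Qed.

Lemma fin_of {z : \bar R} : 0 <= z -> z < +oo -> z = (fine z)%:E.
Proof. by move=> z0 zoo; rewrite fineK // ge0_fin_numE. Qed.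

Lemma union_cheeger E F : P3 P -> cheeger1 mu P Om E -> cheeger1 mu P Om F ->
  cheeger1 mu P Om (E `|` F) /\ mu (E `|` F) = mu (E `\` F) + mu F.
Proof.
move=> P3P chE chF.
have [cE _] := chE; have [cF _] := chF.
have [mE [aE [m0E [mooE PooE]]]] := cE.
have [mF [aF [m0F [mooF PooF]]]] := cF.
rewrite /ae_sub in aE aF.
have mU : measurable (E `|` F) by exact: measurableU.
have mI : measurable (E `&` F) by exact: measurableI.
have mEF : measurable (E `\` F) by exact: measurableD.
have sub := P3P E F mE mF.
have PI0 := P_ge0 _ mI; have PU0 := P_ge0 _ mU.
have PooU : P (E `|` F) < +oo.
  apply: le_lt_trans (lte_add_pinfty PooE PooF).
  apply: le_trans sub; rewrite addeC; exact: leeDl.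
have PooI : P (E `&` F) < +oo.
  apply: le_lt_trans (lte_add_pinfty PooE PooF).
  apply: le_trans sub; exact: leeDl.
have mooU : mu (E `|` F) < +oo :=
  le_lt_trans (measureU2 mu mE mF) (lte_add_pinfty mooE mooF).
have aU : ae_sub mu (E `|` F) Om.
  rewrite /ae_sub setDUl; apply/eqP; rewrite eq_le measure_ge0 andbT.
  apply: le_trans (measureU2 mu (measurableD mE mOm) (measurableD mF mOm)) _.
  change (mu (E `\` Om) + mu (F `\` Om) <= 0).
  have -> : mu (F `\` Om) = 0 := aF.
  by rewrite aE adde0.
have m0U : 0 < mu (E `|` F).
  apply: lt_le_trans m0E _; apply: le_measure; rewrite ?inE //; exact: subsetUl.
have cU : cheeger_cands mu P Om (E `|` F) by [].
have e1 : (E `|` F) `\` F = E `\` F by apply/seteqP; split => x /=; tauto.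
have e2 : (E `|` F) `&` F = F by apply/seteqP; split => x /=; tauto.
have meq1 : mu (E `|` F) = mu (E `\` F) + mu F.
  by have := measureDI mu mU mF; rewrite e1 e2 => H; exact: H.
split; first last.
  by [].
have meq2 : mu E = mu (E `\` F) + mu (E `&` F).
  by have := measureDI mu mE mF => H; exact: H.
have mooI : mu (E `&` F) < +oo.
  apply: le_lt_trans mooE; apply: le_measure; rewrite ?inE //; exact: subIsetl.
have mooEF : mu (E `\` F) < +oo.
  apply: le_lt_trans mooE; apply: le_measure; rewrite ?inE //; exact: subDsetl.
have hI : (h * fine (mu (E `&` F)) <= fine (P (E `&` F)))%R.
  have := fine_ge0 (measure_ge0 mu (E `&` F)); rewrite le_eqVlt => /orP[/eqP <-|mpos].
    by rewrite mulr0 fine_ge0.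
  apply: h_low; split => //; split.
    rewrite /ae_sub; apply/eqP; rewrite eq_le measure_ge0 andbT -aE.
    apply: le_measure; rewrite ?inE //; try exact: measurableD.
    by apply: setSD; exact: subIsetl.
  split => //; by rewrite (fin_of (measure_ge0 _ _) mooI) lte_fin.
apply: cheeger_of => //.
have eE := cheeger_eq _ chE; have eF := cheeger_eq _ chF.
move: sub meq1 meq2.
rewrite (fin_of PI0 PooI) (fin_of PU0 PooU) (fin_of (P_ge0 _ mE) PooE) (fin_of (P_ge0 _ mF) PooF).
rewrite (fin_of (measure_ge0 mu _) mooU) (fin_of (measure_ge0 mu _) mooF).
rewrite (fin_of (measure_ge0 mu E) mooE) (fin_of (measure_ge0 mu _) mooI).
rewrite (fin_of (measure_ge0 mu _) mooEF) /=.
rewrite -!EFinD lee_fin => sub [] -> [] mE'.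
rewrite eE eF mE' in sub *; rewrite !mulrDr in sub *.
lra.
Qed.

End Main.

Section Seq.
Context {R : realType}.

Lemma limn_einf_le (u : (\bar R)^nat) (B : \bar R) : (forall n, u n <= B) -> limn_einf u <= B.
Proof.
move=> uB; rewrite limn_einf_lim (cvg_lim _ (@cvg_einfs_sup _ u)) //.
apply: ge_ereal_sup => _ [n _ <-].
apply: le_trans (uB n); apply: ereal_inf_lbound; exists n => //=.
Qed.

Lemma pick_k (u : nat -> \bar R) (e : R) : (0 < e)%R -> u @ \oo --> 0 ->
  exists k, u k \is a fin_num /\ (fine (u k) < e)%R /\ (k.+1%:R^-1 < e)%R.
Proof.
move=> e0 /fine_cvgP [ufin ucvg].
apply: (@filter_ex _ \oo); near=> k; split; last split.
- by near: k.
  near: k; move/cvgrPdist_lt: ucvg => /(_ e e0); apply: filterS => j.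
  rewrite sub0r normrN; apply: le_lt_trans; exact: ler_norm.
- near: k; exact: (near_infty_natSinv_lt (PosNum e0)).
Unshelve. all: by end_near.
Qed.

End Seq.

Lemma homo_ge (phi : nat -> nat) : {homo phi : m n / (m < n)%N >-> (m < n)%N} ->
  forall k, (k <= phi k)%N.
Proof. by move=> hp; elim=> // k IH; apply: leq_ltn_trans IH (hp _ _ (ltnSn k)). Qed.

Lemma arith {R : realType} (M a b i g f e : R) : (M - a < g)%R -> (g <= M)%R -> (a <= b)%R ->
  (g <= f + i)%R -> (f <= g + i)%R -> (i < e/2)%R -> (b < e/2)%R -> (`|M - f| <= e)%R.
Proof. by move=> *; rewrite ler_norml; apply/andP; split; lra. Qed.

Theorem proposition3p13 (d : measure_display) (X : measurableType d) (R : realType)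
  (mu : {measure set X -> \bar R}) (P : set X -> \bar R)
  (mu_sfin : sigma_finite setT mu)
  (P_ge0 : forall E, measurable E -> 0 <= P E)
  (P_proper : proper_functional P)
  (Om : set X) (mOm : measurable Om)
  (Om_adm : admissible1 mu P Om)
  (Om_pos : 0 < mu Om) (Om_fin : mu Om < +oo)
  (C_ne : cheeger1 mu P Om !=set0) :
  P4 mu P -> P5 mu P ->
  (exists E, cheeger1 mu P Om E /\ forall F, cheeger1 mu P Om F -> mu F <= mu E) /\
  (P3 P ->
   exists Ep, cheeger1 mu P Om Ep /\
     (forall F, cheeger1 mu P Om F -> mu F <= mu Ep) /\
     (forall F, cheeger1 mu P Om F ->
        (forall G, cheeger1 mu P Om G -> mu G <= mu F) ->
        mu ((F `\` Ep) `|` (Ep `\` F)) = 0) /\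
     (forall E, cheeger1 mu P Om E -> ae_sub mu E Ep)).
Proof.
move=> P4P P5P.
have [E0 chE0] := C_ne.
have [cE0 rE0] := chE0.
set h := fine (h1 mu P Om).
have hE : h1 mu P Om = h%:E by rewrite /h -rE0.
have cfin := cand_fin mu P Om P_ge0.
have hlow := h_low mu P Om P_ge0 h hE.
have chof := cheeger_of mu P Om P_ge0 h hE.
have cheq := cheeger_eq mu P Om P_ge0 h hE.
have aeOm := ae_le mu Om mOm.
have [_ _ m0E0 p0E0] := cfin E0 cE0.
have h0 : (0 <= h)%R by rewrite -(pmulr_lge0 _ m0E0) -(cheq E0 chE0).
have fOm : mu Om = (fine (mu Om))%:E := fin_of (measure_ge0 _ _) Om_fin.
have chbnd E : cheeger1 mu P Om E -> (fine (mu E) <= fine (mu Om))%R.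
  case=> cE _; have [mE [aE _]] := cE; have [_ fE _ _] := cfin E cE.
  by rewrite -lee_fin -fE -fOm; exact: aeOm.
set S := [set fine (mu E) | E in cheeger1 mu P Om].
have hsS : has_sup S.
  split; first by exists (fine (mu E0)), E0.
  by exists (fine (mu Om)) => _ [E chE <-]; exact: chbnd.
set M := sup S.
have MS E : cheeger1 mu P Om E -> (fine (mu E) <= M)%R.
  by move=> chE; apply: sup_upper_bound => //; exists E.
have M0 : (0 < M)%R := lt_le_trans m0E0 (MS _ chE0).
have : forall k : nat, exists E, cheeger1 mu P Om E /\ (M - k.+1%:R^-1 < fine (mu E))%R.
  move=> k; have k0 : (0 < k.+1%:R^-1 :> R)%R by rewrite invr_gt0 ltr0Sn.
  have [_ [E chE <-] lt] := sup_adherent k0 hsS.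
  by exists E.
move=> /choice [Es HEs].
set c := (h * fine (mu Om))%R.
have c0 : (0 <= c)%R by rewrite mulr_ge0 // fine_ge0 // measure_ge0.
have HP5 : forall k, measurable (Es k) /\ mu (Es k) < +oo /\ P (Es k) <= c%:E.
  move=> k; have [chk _] := HEs k; have [[mk [_ [_ [mook Pook]]]] _] := chk.
  split => //; split => //.
  have [fP _ _ _] := cfin _ chk.1.
  by rewrite fP lee_fin cheq // ler_wpM2l // chbnd.
have [phi [F [phiI [mF [mooF [PFc cvgF]]]]]] := P5P c c0 Es HP5.
set G := fun k => Es (phi k).
have phige k : (k <= phi k)%N := homo_ge _ phiI k.
have Icvg : (fun k => Idist mu (G k) F) @ \oo --> 0 := cvgF.
have mG k : measurable (G k) := (HP5 (phi k)).1.
have fk1 k : mu (G k) <= mu F + Idist mu (G k) F := mu_le_Idist mu _ _ (mG k) mF.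
have fk2 k : mu F <= mu (G k) + Idist mu (G k) F.
  by rewrite IdistC; exact: mu_le_Idist.
have fk3 k : mu (F `\` Om) <= Idist mu (G k) F.
  have [[_ [aG _]] _] := (HEs (phi k)).1; rewrite /ae_sub in aG.
  have sub : F `\` Om `<=` (F `\` G k) `|` (G k `\` Om).
    move=> x /= [Fx nOx]; case: (pselect (G k x)) => Gx; [right|left] => //.
  apply: le_trans (le_measure _ _ _ sub) _; rewrite ?inE; try exact: measurableD.
    by apply: measurableU; exact: measurableD.
  apply: le_trans (measureU2 mu (measurableD mF (mG k)) (measurableD (mG k) mOm)) _.
  change (mu (F `\` G k) + mu (G k `\` Om) <= Idist mu (G k) F).
  have -> : mu (G k `\` Om) = 0 := aG.
  by rewrite adde0 IdistC; exact: muD_le_Idist.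
have aF : ae_sub mu F Om.
  rewrite /ae_sub; apply/eqP; rewrite eq_le measure_ge0 andbT.
  apply/lee_addgt0Pr => e e0; rewrite add0e.
  have [k [kfin [kle _]]] := pick_k _ _ e0 Icvg.
  apply: le_trans (fk3 k) _; rewrite -(fineK kfin) lee_fin; exact: ltW.
have fF : mu F = (fine (mu F))%:E := fin_of (measure_ge0 _ _) mooF.
have fG k : mu (G k) = (fine (mu (G k)))%:E := fin_of (measure_ge0 _ _) (HP5 (phi k)).2.1.
have MF : M = fine (mu F).
  apply/eqP; rewrite -subr_eq0 -normr_le0; apply/ler_addgt0Pr => e e0; rewrite add0r.
  have e2 : (0 < e / 2)%R by rewrite divr_gt0.
  have [k [kfin [kle kinv]]] := pick_k _ _ e2 Icvg.
  have [chk ltk] := HEs (phi k).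
  have Gle := MS _ chk.
  have inv : ((phi k).+1%:R^-1 <= k.+1%:R^-1 :> R)%R.
    by rewrite lef_pV2 ?posrE ?ltr0Sn // ler_nat ltnS.
  have := fk1 k; have := fk2 k.
  rewrite fF (fG k) -(fineK kfin) -!EFinD !lee_fin => f2 f1.
  rewrite /G /= in f1 f2 kle.
  exact: (arith _ _ _ _ _ _ _ ltk Gle inv f1 f2 kle kinv).
have PF : P F <= (h * M)%:E.
  apply: le_trans (P4P G F mG mF cvgF) _.
  apply: limn_einf_le => k; have [chk _] := HEs (phi k).
  have [fP _ _ _] := cfin _ chk.1.
  by rewrite /G /= fP lee_fin cheq // ler_wpM2l // MS.
have PFoo : P F < +oo := le_lt_trans PF (ltry _).
have cF : cheeger_cands mu P Om F.
  split => //; split => //; split => //; by rewrite fF lte_fin -MF.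
have chF : cheeger1 mu P Om F.
  apply: chof => //; rewrite -MF -lee_fin -(fin_of (P_ge0 _ mF) PFoo); exact: PF.
have maxF : forall E, cheeger1 mu P Om E -> mu E <= mu F.
  move=> E chE; have [_ fE _ _] := cfin _ chE.1.
  by rewrite fE fF lee_fin -MF; exact: MS.
split; first by exists F.
move=> P3P; exists F; split => //; split => //.
have aeF : forall E, cheeger1 mu P Om E -> ae_sub mu E F.
  move=> E chE.
  have [chU eU] := union_cheeger mu P Om P_ge0 mOm h hE E F P3P chE chF.
  have := maxF _ chU; rewrite eU.
  have [mE _] := chE.1.
  have mooEF : mu (E `\` F) < +oo.
    have [_ [_ [_ [mooE _]]]] := chE.1.
    apply: le_lt_trans mooE; apply: le_measure; rewrite ?inE //; try exact: measurableD.
    all: try exact: subDsetl.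
  rewrite /ae_sub (fin_of (measure_ge0 _ _) mooEF) fF -EFinD lee_fin => le.
  congr EFin; apply/eqP; rewrite eq_le fine_ge0 ?measure_ge0 //; lra.
split => //.
move=> E chE maxE.
have [mE _] := chE.1.
have e1 : mu (E `\` F) = 0 := aeF E chE.
have le1 := maxE _ chF; have le2 := maxF _ chE.
have dE : mu E = mu (E `\` F) + mu (E `&` F).
  by have := measureDI mu mE mF => H; exact: H.
have dF : mu F = mu (F `\` E) + mu (F `&` E).
  by have := measureDI mu mF mE => H; exact: H.
have e2 : mu (F `\` E) = 0.
  rewrite e1 add0e setIC in dE.
  have mooFE : mu (F `\` E) < +oo.
    apply: le_lt_trans mooF; apply: le_measure; rewrite ?inE //; try exact: measurableD.
    all: try exact: subDsetl.
  have mooE : mu E < +oo := le_lt_trans le2 mooF.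
  move: le1; rewrite dF -dE (fin_of (measure_ge0 _ _) mooFE) (fin_of (measure_ge0 mu E) mooE) -EFinD lee_fin => le.
  congr EFin; apply/eqP; rewrite eq_le fine_ge0 ?measure_ge0 //; lra.
apply/eqP; rewrite eq_le measure_ge0 andbT.
apply: le_trans (measureU2 mu (measurableD mE mF) (measurableD mF mE)) _.
change (mu (E `\` F) + mu (F `\` E) <= 0).
by rewrite e1 e2 adde0.
Qed.
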